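(* Let $a,b\ge1$, let $L$ be a Latin square for the $a\times a$ system and $\bar L$ a Latin square for the $b\times b$ system, both with symbols in the nonnegative integers, such that $L$ removes $[\mathrm{span}(\Delta x)]^{\perp}$ and $\bar L$ removes $[\mathrm{span}(\Delta\bar x)]^{\perp}$, where $\Delta x\in\Delta\mathcal{S}^{2a}$ and $\Delta\bar x\in\Delta\mathcal{S}^{2b}$ are nonzero. Then $L\otimes\bar L$ is a Latin square for the $(a+b)\times(a+b)$ system, and for every $k\in\mathbb{C}$ it removes $[\mathrm{span}(\mathrm{comp}(\Delta x,k\Delta\bar x))]^{\perp}$.
   Context: $\mathcal{S}$ is a signal set of size $M$ with labelling bijection $\mu:\mathbb{Z}_M\to\mathcal{S}$; $\Delta\mathcal{S}=\{s-s':s,s'\in\mathcal{S}\}$; $\mu(u)=(\mu(u_1),\dots,\mu(u_m))^T$ for $u\in\mathbb{Z}_M^m$. For $V\subseteq\mathbb{C}^N$, $V^\perp=\{y:y^Tv=0\ \forall v\in V\}$. A Latin square for the $n\times n$ system is a map $L:\mathbb{Z}_M^{n}\times\mathbb{Z}_M^{n}\to\Sigma$ with no symbol repeated in any row or column. For nonzero $w\in\mathbb{C}^{2n}$, $L$ removes $[\mathrm{span}(w)]^\perp$ if $L(u,v)=L(u',v')$ whenever $[\mu(u)^T-\mu(u')^T\;\;\mu(v)^T-\mu(v')^T]^T\in\mathrm{span}(w)\setminus\{0\}$. For $y\in\mathbb{C}^{2a}$, $z\in\mathbb{C}^{2b}$, the compound vector is $\mathrm{comp}(y,z)=[y_{[1:a]}^T\;z_{[1:b]}^T\;y_{[a+1:2a]}^T\;z_{[b+1:2b]}^T]^T\in\mathbb{C}^{2a+2b}$,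 where $y_{[i:j]}$ is the subvector of components $i$ through $j$. The Cartesian product $L\otimes\bar L$ is defined on $\mathbb{Z}_M^{a+b}\times\mathbb{Z}_M^{a+b}$ by writing row index $(u,\bar u)$ and column index $(v,\bar v)$ with $u,v\in\mathbb{Z}_M^a$ (first $a$ components) and $\bar u,\bar v\in\mathbb{Z}_M^b$ (last $b$ components), and setting $(L\otimes\bar L)((u,\bar u),(v,\bar v))=L(u,v)+\bar L(\bar u,\bar v)\,(\max L+1)$, where $\max L$ is the largest symbol appearing in $L$. *)

(* Defs.v *)
From HB Require Import structures.
From mathcomp Require Import all_boot all_order all_algebra.
Set Implicit Arguments. Unset Strict Implicit. Unset Printing Implicit Defensive.
Import Order.TTheory GRing.Theory Num.Theory.
Local Open Scope ring_scope.

(* Z_M^n : words of length n over Z_M = 'I_M (M is the signal set size). *)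
Definition word (M n : nat) := {ffun 'I_n -> 'I_M}.

Definition muv (F : fieldType) (M n : nat) (mu : 'I_M -> F) (u : word M n)
  : 'cV[F]_n := \col_i mu (u i).

Definition is_latin (M n : nat) (L : word M n -> word M n -> nat) : Prop :=
  (forall u, injective (L u)) /\ (forall v, injective (fun u => L u v)).

Definition removes (F : fieldType) (M n : nat) (mu : 'I_M -> F)
  (L : word M n -> word M n -> nat) (w : 'cV[F]_(n + n)) : Prop :=
  forall u u' v v' : word M n,
    let d := col_mx (muv mu u - muv mu u') (muv mu v - muv mu v') in
    (exists c : F, d = c *: w) -> d != 0 -> L u v = L u' v'.

(* x is in (Delta S)^N, where S is the image of mu *)
Definition in_DeltaS (F : fieldType) (M N : nat) (mu : 'I_M -> F) (x : 'cV[F]_N) :=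
  forall i, exists s s' : 'I_M, x i 0 = mu s - mu s'.

Definition compound (F : fieldType) (a b : nat) (y : 'cV[F]_(a + a)) (z : 'cV[F]_(b + b))
  : 'cV[F]_((a + b) + (a + b)) :=
  col_mx (col_mx (usubmx y) (usubmx z)) (col_mx (dsubmx y) (dsubmx z)).

Definition wfst (M a b : nat) (u : word M (a + b)) : word M a :=
  [ffun i => u (lshift b i)].
Definition wsnd (M a b : nat) (u : word M (a + b)) : word M b :=
  [ffun j => u (rshift a j)].

Definition maxL (M n : nat) (L : word M n -> word M n -> nat) : nat :=
  (\max_(p : word M n * word M n) L p.1 p.2)%N.

Definition lprod (M a b : nat) (L : word M a -> word M a -> nat)
  (Lb : word M b -> word M b -> nat) : word M (a + b) -> word M (a + b) -> nat :=
  fun U V => (L (wfst U) (wfst V) + Lb (wsnd U) (wsnd V) * (maxL L).+1)%N.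

(* Main.v *)
Require Import Defs.
From HB Require Import structures.
From mathcomp Require Import all_boot all_order all_algebra.
Import GRing.Theory.
Local Open Scope ring_scope.
Set Implicit Arguments. Unset Strict Implicit.

Lemma muv_split (F : fieldType) (M a b : nat) (mu : 'I_M -> F) (U : word M (a + b)) :
  muv mu U = col_mx (muv mu (wfst U)) (muv mu (wsnd U)).
Proof.
apply/matrixP => i j; rewrite -(splitK i).
case: (split i) => k /=; by rewrite ?col_mxEu ?col_mxEd !mxE ffunE.
Qed.

Lemma muv_inj (F : fieldType) (M n : nat) (mu : 'I_M -> F) (mu_inj : injective mu)
  (u u' : word M n) : muv mu u = muv mu u' -> u = u'.
Proof.
move=> H; apply/ffunP => i.
by have := congr1 (fun m : 'cV[F]_n => m i ord0) H; rewrite !mxE => /mu_inj.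
Qed.

Lemma word_eq (M a b : nat) (U V : word M (a + b)) :
  wfst U = wfst V -> wsnd U = wsnd V -> U = V.
Proof.
move=> H1 H2; apply/ffunP => i; rewrite -(splitK i).
case: (split i) => k /=.
- by have := congr1 (fun f : word M a => f k) H1; rewrite !ffunE.
- by have := congr1 (fun f : word M b => f k) H2; rewrite !ffunE.
Qed.

Lemma rem_part (F : fieldType) (M n : nat) (mu : 'I_M -> F) (mu_inj : injective mu)
  (L : word M n -> word M n -> nat) (w : 'cV[F]_(n + n)) (hr : removes mu L w)
  (u u' v v' : word M n) (c : F) :
  col_mx (muv mu u - muv mu u') (muv mu v - muv mu v') = c *: w -> L u v = L u' v'.
Proof.
move=> H.
case: (boolP (col_mx (muv mu u - muv mu u') (muv mu v - muv mu v') == 0)) => Hd.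
- move: Hd; rewrite col_mx_eq0 => /andP[]; rewrite !subr_eq0 => /eqP /(muv_inj mu_inj) ->.
  by move=> /eqP /(muv_inj mu_inj) ->.
- by apply: hr => //; exists c.
Qed.

Lemma Lbound (M n : nat) (L : word M n -> word M n -> nat) u v : (L u v <= maxL L)%N.
Proof. rewrite /maxL; exact: (@leq_bigmax _ (fun p : word M n * word M n => L p.1 p.2) (u, v)). Qed.

Lemma decomp (m x1 y1 x2 y2 : nat) : (x1 <= m)%N -> (x2 <= m)%N ->
  (x1 + y1 * m.+1 = x2 + y2 * m.+1)%N -> x1 = x2 /\ y1 = y2.
Proof.
move=> h1 h2 H.
have Hx : x1 = x2.
  have := congr1 (fun t => t %% m.+1)%N H => /=.
  by rewrite ![(_ + _ * _)%N]addnC !modnMDl !modn_small.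
split => //; subst x2; move/addnI: H => /eqP; rewrite eqn_pmul2r //; by move/eqP.
Qed.

Unset Implicit Arguments.
Theorem lemma10 (F : fieldType) (M : nat) (mu : 'I_M -> F) (mu_inj : injective mu)
  (a b : nat) (ha : (1 <= a)%N) (hb : (1 <= b)%N)
  (L : word M a -> word M a -> nat) (Lb : word M b -> word M b -> nat)
  (dx : 'cV[F]_(a + a)) (dxb : 'cV[F]_(b + b))
  (hdx : in_DeltaS mu dx) (hdxb : in_DeltaS mu dxb)
  (hdx0 : dx != 0) (hdxb0 : dxb != 0)
  (hL : is_latin L) (hLb : is_latin Lb)
  (hLr : removes mu L dx) (hLbr : removes mu Lb dxb) :
  is_latin (lprod L Lb) /\
  (forall k : F, removes mu (lprod L Lb) (compound dx (k *: dxb))).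
Proof.
case: hL => hL1 hL2; case: hLb => hLb1 hLb2.
split; first split.
- move=> U V V' /= H; rewrite /lprod in H.
  have [e1 e2] := decomp (Lbound _ _ _) (Lbound _ _ _) H.
  by apply: word_eq; [apply: hL1 e1 | apply: hLb1 e2].
- move=> V U U' /= H; rewrite /lprod in H.
  have [e1 e2] := decomp (Lbound _ _ _) (Lbound _ _ _) H.
  by apply: word_eq; [apply: hL2 e1 | apply: hLb2 e2].
move=> k U U' V V' /= [c Hc] _.
move: Hc; rewrite /compound (muv_split _ U) (muv_split _ U') (muv_split _ V) (muv_split _ V') !scale_col_mx.
have E : forall (n1 n2 : nat) (A B : 'cV[F]_n1) (C D : 'cV[F]_n2),
    col_mx A C - col_mx B D = col_mx (A - B) (C - D).
  by move=> n1 n2 A B C D; rewrite opp_col_mx add_col_mx.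
rewrite !E => /eq_col_mx [/eq_col_mx [h1 h2] /eq_col_mx [h3 h4]].
rewrite /lprod; congr (_ + _ * _)%N.
- apply: (rem_part mu_inj hLr (c := c)).
  by rewrite -(vsubmxK dx) scale_col_mx h1 h3.
- apply: (rem_part mu_inj hLbr (c := c * k)).
  by rewrite -scalerA -(vsubmxK (k *: dxb)) scale_col_mx h2 h4.
Qed.
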